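(* Let $\underline c=(c_1,\dots,c_k)$ and $\underline d=(d_1,\dots,d_k)$ be lists of positive integers. Arrange them in the array whose top row is $d_1,\dots,d_k$ (positions $1,\dots,k$) and whose bottom row is $1,c_1,\dots,c_k$ (positions $0,1,\dots,k$). An allowable path is a path in this array starting at the entry $1$ in which each step is a right move (same row, position $+1$), an up-right move (from bottom row position $j$ to top row position $j+1$), or a down move (from top row position $j$ to bottom row position $j$); its associated integer is the product of all entries encountered along the path. Let $E$ be the set of integers associated to allowable paths ending at $c_k$ and $F$ the set of integers associated to allowable paths ending at $d_k$. Then \[Y_{\underline c,\underline d}=\frac{\gcd(E)}{\gcd(E\cup F)}.\]
   Context: For positive integers $x,y$, $(x,y)$ denotes the gcd and $x\colon y=x/(x,y)$. For lists $\underline c=(c_1,\dots,c_k)$, $\underline d=(d_1,\dots,d_k)$ of positive integers define recursively $Y_0=1$ and $Y_j=\big((c_jY_{j-1})\colon d_j,\ c_j\big)$ (a gcd) for $1\le j\le k$, and set $Y_{\underline c,\underline d}=Y_k$. *)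

(* Defs.v *)
From mathcomp Require Import all_boot.
Set Implicit Arguments. Unset Strict Implicit. Unset Printing Implicit Defensive.

Definition colon (x y : nat) : nat := x %/ gcdn x y.

Fixpoint Yrec (Y : nat) (c d : seq nat) : nat :=
  match c, d with
  | cj :: c', dj :: d' => Yrec (gcdn (colon (cj * Y) dj) cj) c' d'
  | _, _ => Y
  end.
Definition Ycd (c d : seq nat) : nat := Yrec 1 c d.

(* The array: top row d_1..d_k at positions 1..k, bottom row 1,c_1..c_k
   at positions 0..k.  A state is (on_top, position). *)
Inductive move := MRight | MUpRight | MDown.

Definition entry (c d : seq nat) (top : bool) (j : nat) : nat :=
  if top then nth 1 d j.-1 else (if j is j'.+1 then nth 1 c j' else 1).

Definition valid_state (k : nat) (top : bool) (j : nat) : bool :=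
  if top then (1 <= j <= k) else (j <= k).

Definition step (k : nat) (s : bool * nat) (m : move) : option (bool * nat) :=
  let: (top, j) := s in
  match m with
  | MRight => if valid_state k top j.+1 then Some (top, j.+1) else None
  | MUpRight => if top then None else
                if valid_state k true j.+1 then Some (true, j.+1) else None
  | MDown => if top then Some (false, j) else None
  end.

(* Run a move sequence from state s; returns the final state and the
   product of the entries encountered after s (s itself excluded). *)
Fixpoint run (c d : seq nat) (k : nat) (s : bool * nat) (ms : seq move)
  : option ((bool * nat) * nat) :=
  match ms with
  | [::] => Some (s, 1)
  | m :: ms' =>
      match step k s m with
      | None => None
      | Some s' =>
          match run c d k s' ms' with
          | None => None
          | Some (f, p) => Some (f, entry c d s'.1 s'.2 * p)
          end
      end
  end.

Definition path_int (c d : seq nat) (ms : seq move) (f : bool * nat) (n : nat) : Prop :=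
  let k := size c in
  exists p, run c d k (false, 0) ms = Some (f, p) /\ n = entry c d false 0 * p.

Definition Eset (c d : seq nat) (n : nat) : Prop :=
  exists ms, path_int c d ms (false, size c) n.
Definition Fset (c d : seq nat) (n : nat) : Prop :=
  exists ms, path_int c d ms (true, size c) n.

Definition is_gcd_of (S : nat -> Prop) (g : nat) : Prop :=
  (forall x, S x -> g %| x) /\ (forall m, (forall x, S x -> m %| x) -> m %| g).

(* Main.v *)
From mathcomp Require Import all_boot zify.
Require Import Defs.
Lemma core (Y c d : nat) : 0 < Y -> 0 < c -> 0 < d ->
  c * gcdn Y d = gcdn (colon (c*Y) d) c * gcdn (c*gcdn Y d) d.
Proof.
move=> Y0 c0 d0; rewrite /colon.
have gY : 0 < gcdn Y d by rewrite gcdn_gt0 Y0.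
have cY : 0 < c * Y by rewrite muln_gt0 c0.
have q0 : 0 < (c * Y) %/ gcdn (c * Y) d.
  rewrite divn_gt0; last by rewrite gcdn_gt0 cY.
  apply: dvdn_leq => //. exact: dvdn_gcdl.
have g2 : 0 < gcdn (c * gcdn Y d) d by rewrite gcdn_gt0 d0 orbT.
have g3 : 0 < gcdn ((c * Y) %/ gcdn (c * Y) d) c by rewrite gcdn_gt0 q0.
have g4 : 0 < gcdn (c * Y) d by rewrite gcdn_gt0 cY.
apply: eqn_from_log.
- by rewrite muln_gt0 c0.
- by rewrite muln_gt0 g2 g3.
move=> p.
rewrite lognM // lognM // logn_gcd // logn_gcd // ?muln_gt0 ?c0 //.
rewrite logn_div ?dvdn_gcdl // !logn_gcd ?muln_gt0 ?c0 // !lognM //. rewrite logn_gcd //. lia.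
Qed.

Section Paths.
Variables (c d : seq nat).
Let k := size c.

Definition Reach (s : bool * nat) (n : nat) : Prop :=
  exists ms, run c d k (false, 0) ms = Some (s, n).

Lemma run_rcons s ms m :
  run c d k s (rcons ms m) =
  match run c d k s ms with
  | None => None
  | Some (f, p) => match step k f m with
                   | None => None
                   | Some s' => Some (s', p * entry c d s'.1 s'.2) end
  end.
Proof.
elim: ms s => [|m0 ms IH] s /=.
  by case: (step k s m) => // s'; rewrite muln1 mul1n.
case: (step k s m0) => // s0; rewrite IH.
case: (run c d k s0 ms) => // [[f p]].
by case: (step k f m) => // s'; rewrite mulnA.
Qed.

Lemma Reach_start : Reach (false, 0) 1.
Proof. by exists [::]. Qed.

Lemma Reach_step f p m s : Reach f p -> step k f m = Some s ->
  Reach s (p * entry c d s.1 s.2).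
Proof. by move=> [ms Hms] Hs; exists (rcons ms m); rewrite run_rcons Hms Hs. Qed.

Lemma Reach_inv s n : Reach s n -> (s = (false, 0) /\ n = 1) \/
  exists f m p, [/\ Reach f p, step k f m = Some s & n = p * entry c d s.1 s.2].
Proof.
case=> ms; case/lastP: ms => [|ms m] /=.
  by case=> <- <-; left.
rewrite run_rcons; case E: (run c d k (false, 0) ms) => [[f p]|] //.
case E2: (step k f m) => [s'|] // [<- <-]; right.
by exists f, m, p; split => //; exists ms.
Qed.

Lemma Reach_top0 n : ~ Reach (true, 0) n.
Proof.
move/Reach_inv => [[]//|[f [m [p [_ H _]]]]].
move: H; case: f => [[] j]; case: m => /=; try case: ifP => //; by [].
Qed.

Lemma Reach_bot0 n : Reach (false, 0) n -> n = 1.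
Proof.
move/Reach_inv => [[]//|[f [m [p [Hf H _]]]]].
move: H Hf; case: f => [[] j]; case: m => /=; try case: ifP => //; try by [].
by case=> ->; move/Reach_top0.
Qed.

Lemma Reach_top j n : j < k ->
  Reach (true, j.+1) n <->
  exists p, (Reach (false, j) p \/ Reach (true, j) p) /\ n = p * nth 1 d j.
Proof.
move=> jk; split.
  move/Reach_inv => [[]//|[f [m [p [Hf H ->]]]]].
  exists p; split => //.
  move: H Hf; case: f => [[] i]; case: m => /=; try case: ifP => //; try by [].
  - by move=> _ [->]; right.
  - by move=> _ [->]; left.
move=> [p [[H|H] ->]].
- by apply: (@Reach_step _ _ MUpRight _ H) => /=; rewrite /valid_state jk.
- by apply: (@Reach_step _ _ MRight _ H) => /=; rewrite /valid_state jk.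
Qed.

Lemma Reach_bot j n : j < k ->
  Reach (false, j.+1) n <->
  exists p, (Reach (false, j) p \/ Reach (true, j.+1) p) /\ n = p * nth 1 c j.
Proof.
move=> jk; split.
  move/Reach_inv => [[]//|[f [m [p [Hf H ->]]]]].
  exists p; split => //.
  move: H Hf; case: f => [[] i]; case: m => /=; try case: ifP => //; try by [].
  - by case=> ->; right.
  - by move=> _ [->]; left.
move=> [p [[H|H] ->]].
- by apply: (@Reach_step _ _ MRight _ H) => /=; rewrite /valid_state jk.
- by apply: (@Reach_step _ _ MDown _ H).
Qed.

End Paths.

Definition GP (S : nat -> Prop) (g : nat) : Prop :=
  (forall x, S x -> g %| x) /\ (forall m t, (forall x, S x -> m %| x * t) -> m %| g * t).

Lemma GP_ext S S' g : (forall x, S x <-> S' x) -> GP S g -> GP S' g.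
Proof.
move=> E [H1 H2]; split=> [x /E|m t H]; first exact: H1.
by apply: H2 => x /E; apply: H.
Qed.

Lemma GP_comb A B a b w : GP A a -> GP B b ->
  GP (fun n => exists p, (A p \/ B p) /\ n = p * w) (w * gcdn a b).
Proof.
move=> [A1 A2] [B1 B2]; split.
  move=> x [p [[H|H] ->]]; rewrite [p * w]mulnC; apply: dvdn_mul => //.
  - by apply: dvdn_trans (dvdn_gcdl a b) (A1 _ H).
  - by apply: dvdn_trans (dvdn_gcdr a b) (B1 _ H).
move=> m t H.
have HA : m %| a * (w * t).
  by apply: A2 => x Ax; rewrite mulnA; apply: H; exists x; split; [left|].
have HB : m %| b * (w * t).
  by apply: B2 => x Bx; rewrite mulnA; apply: H; exists x; split; [right|].
have : m %| gcdn (a * (w * t)) (b * (w * t)) by rewrite dvdn_gcd HA HB.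
by rewrite -muln_gcdl mulnA [gcdn a b * w]mulnC.
Qed.

Lemma GP_union A B a b : GP A a -> GP B b -> GP (fun n => A n \/ B n) (gcdn a b).
Proof.
move=> HA HB; have := @GP_comb _ _ _ _ 1 HA HB; rewrite mul1n; apply: GP_ext => x.
split; first by move=> [p [H ->]]; rewrite muln1.
by move=> H; exists x; rewrite muln1.
Qed.

Lemma GP_uniq S g h : is_gcd_of S g -> GP S h -> g = h.
Proof.
move=> [G1 G2] [H1 H2]; apply/eqP; rewrite eqn_dvd; apply/andP; split.
  by rewrite -[h]muln1; apply: H2 => x Sx; rewrite muln1; apply: G1.
exact: G2.
Qed.

Arguments GP_ext {S S' g}.
Arguments GP_comb {A B a b w}.
Arguments GP_union {A B a b}.
Arguments GP_uniq {S g h}.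

Definition stepf (ef : nat * nat) (x y : nat) : nat * nat :=
  let f' := y * gcdn ef.1 ef.2 in (x * gcdn ef.1 f', f').

Fixpoint efrec (ef : nat * nat) (c d : seq nat) : nat * nat :=
  match c, d with
  | x :: c', y :: d' => efrec (stepf ef x y) c' d'
  | _, _ => ef
  end.

Lemma efrec_rcons ef c d x y : size c = size d ->
  efrec ef (rcons c x) (rcons d y) = stepf (efrec ef c d) x y.
Proof.
elim: c d ef => [|x0 c IH] [|y0 d] ef //= [] H; exact: IH.
Qed.

Lemma Yrec_ef c d : size c = size d -> all (fun x => 0 < x) c ->
  all (fun x => 0 < x) d -> forall Y ef, 0 < Y -> 0 < ef.1 ->
  ef.1 = Y * gcdn ef.1 ef.2 ->
  Yrec Y c d = (efrec ef c d).1 %/ gcdn (efrec ef c d).1 (efrec ef c d).2.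
Proof.
elim: c d => [|x c IH] [|y d] //=.
  move=> _ _ _ Y [e f] /= Y0 e0 He.
  have g0 : 0 < gcdn e f by rewrite gcdn_gt0 e0.
  by rewrite {1}He mulnK.
move=> [Hs] /andP[x0 Hc] /andP[y0 Hd] Y [e f] Y0 /= e0 He.
have g0 : 0 < gcdn e f by rewrite gcdn_gt0 e0.
apply: IH => //=.
- by rewrite gcdn_gt0 x0 orbT.
- by rewrite muln_gt0 x0 gcdn_gt0 e0.
rewrite /stepf /=.
set g := gcdn e f in He g0 *; clearbody g; subst e.
rewrite -muln_gcdl mulnA -muln_gcdl {1}(@core Y x y Y0 x0 y0) mulnA.
by [].
Qed.

Lemma main_GP c d : size c = size d -> forall j, j <= size c ->
  GP (Reach c d (false, j)) (efrec (1, 0) (take j c) (take j d)).1 /\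
  GP (Reach c d (true, j)) (efrec (1, 0) (take j c) (take j d)).2.
Proof.
move=> Hs; elim=> [|j IH] jk.
  rewrite !take0 /=; split; split.
  - by move=> x _; exact: dvd1n.
  - by move=> m t H; exact: H _ (Reach_start c d).
  - by move=> x /Reach_top0.
  - by move=> m t _; rewrite mul0n dvdn0.
have jc : j < size c by [].
have jd : j < size d by rewrite -Hs.
have [HA HB] := IH (ltnW jk).
rewrite (take_nth 1 jc) (take_nth 1 jd) efrec_rcons; last by rewrite !size_take Hs.
rewrite /stepf /=.
have HT := GP_ext (fun x => iff_sym (Reach_top c d j x jc)) (GP_comb HA HB).
split => //.
exact: GP_ext (fun x => iff_sym (Reach_bot c d j x jc)) (GP_comb HA HT).
Qed.

Theorem proposition7p14 (c d : seq nat) :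
  size c = size d ->
  all (fun x => 0 < x) c -> all (fun x => 0 < x) d ->
  forall gE gEF : nat,
    is_gcd_of (Eset c d) gE ->
    is_gcd_of (fun n => Eset c d n \/ Fset c d n) gEF ->
    gEF %| gE /\ Ycd c d = gE %/ gEF.
Proof.
move=> Hs Hc Hd gE gEF HE HEF.
have [HA HB] := main_GP c d Hs (size c) (leqnn (size c)).
have Td : take (size c) d = d by rewrite Hs take_size.
rewrite take_size Td in HA HB.
have EE b n : Reach c d (b, size c) n <->
    exists ms, path_int c d ms (b, size c) n.
  split.
  - by move=> [ms H]; exists ms, n; split => //; rewrite /entry /= mul1n.
  - by move=> [ms [p [H ->]]]; exists ms; rewrite /entry /= mul1n.
have -> := GP_uniq HE (GP_ext (fun n => EE false n) HA).
have EF n : (Reach c d (false, size c) n \/ Reach c d (true, size c) n) <->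
    (Eset c d n \/ Fset c d n).
  by split; case=> H; [left|right|left|right]; apply/EE.
have -> := GP_uniq HEF (GP_ext EF (GP_union HA HB)).
split; first exact: dvdn_gcdl.
by rewrite /Ycd (@Yrec_ef c d Hs Hc Hd 1 (1, 0)).
Qed.
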